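(* Let $L$ be a sublattice of $A_2$ of rank $2$. Then there exist $b_0,b_1\in L$ forming a basis of $L$ such that, with $b_2=-b_0-b_1$, the $3\times3$ matrix with rows $b_0,b_1,b_2$ has all off-diagonal entries $\le 0$. (Equivalently, $L$ is the Laplacian lattice of a regular digraph on three vertices.)
   Context: $A_2=\{x\in\mathbb Z^3:x_0+x_1+x_2=0\}$. A regular digraph is a directed multigraph in which each vertex has equal in-degree and out-degree; its Laplacian lattice is the lattice generated by the rows of its Laplacian matrix, which has the out-degrees on the diagonal and $-($number of arcs between the corresponding vertices$)$ off the diagonal. *)

(* Defs.v *)
From HB Require Import structures.
From mathcomp Require Import all_boot all_order all_algebra.
Set Implicit Arguments. Unset Strict Implicit. Unset Printing Implicit Defensive.
Import Order.TTheory GRing.Theory Num.Theory.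
Local Open Scope ring_scope.

Definition vec3 := 'rV[int]_3.

Definition inA2 (x : vec3) : Prop := x 0 0 + x 0 1 + x 0 2 = 0.

Definition is_subgroup (L : vec3 -> Prop) : Prop :=
  L 0 /\ (forall x y, L x -> L y -> L (x - y)).

Definition sublattice_A2 (L : vec3 -> Prop) : Prop :=
  is_subgroup L /\ (forall x, L x -> inA2 x).

Definition Zindep2 (u v : vec3) : Prop :=
  forall a b : int, a *: u + b *: v = 0 -> a = 0 /\ b = 0.

Definition Zindep3 (u v w : vec3) : Prop :=
  forall a b c : int, a *: u + b *: v + c *: w = 0 -> [/\ a = 0, b = 0 & c = 0].

Definition rank2 (L : vec3 -> Prop) : Prop :=
  (exists u v, [/\ L u, L v & Zindep2 u v]) /\
  ~ (exists u v w, [/\ L u, L v, L w & Zindep3 u v w]).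

Definition is_basis2 (L : vec3 -> Prop) (b0 b1 : vec3) : Prop :=
  [/\ L b0, L b1, Zindep2 b0 b1 &
      forall x, L x -> exists a b : int, x = a *: b0 + b *: b1].

Definition rows3 (b0 b1 : vec3) : 'M[int]_3 :=
  \matrix_(i < 3, j < 3)
    (if (i == 0 :> nat) then b0 0 j
     else if (i == 1 :> nat) then b1 0 j
     else (- b0 - b1) 0 j).

(* Main.v *)
Require Import Defs.
From HB Require Import structures.
From mathcomp Require Import all_boot all_order all_algebra.
From Stdlib Require Import ZArith Lia Classical.
Import Order.TTheory GRing.Theory Num.Theory.
Local Open Scope ring_scope.

Definition i2Z (x : int) : Z :=
  match x with Posz n => Z.of_nat n | Negz n => (- Z.of_nat n.+1)%Z end.

Lemma int_decomp (x : int) : exists n m : nat, x = n%:Z - m%:Z.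
Proof.
case: x => n; first by exists n, 0%N; rewrite subr0.
by exists 0%N, n.+1; rewrite NegzE sub0r.
Qed.

Lemma i2Z_sub_nat (n m : nat) : i2Z (n%:Z - m%:Z) = (Z.of_nat n - Z.of_nat m)%Z.
Proof.
case: (leqP m n) => h.
  rewrite subzn //= -minusE. move/ssrnat.leP: h => h. lia.
have -> : n%:Z - m%:Z = Negz (m - n.+1)%nat.
  rewrite NegzE.
  have e : (m - n.+1).+1 = (m - n)%nat.
    move/ssrnat.leP: (h) => h'. rewrite -minusE. lia.
  by rewrite e -subzn ?(ltnW h) // opprB.
rewrite /=. move/ssrnat.leP: h => h. rewrite -minusE. lia.
Qed.

Lemma i2ZD (x y : int) : i2Z (x + y) = (i2Z x + i2Z y)%Z.
Proof.
have [n1 [m1 ->]] := int_decomp x; have [n2 [m2 ->]] := int_decomp y.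
have -> : n1%:Z - m1%:Z + (n2%:Z - m2%:Z) = (n1 + n2)%nat%:Z - (m1 + m2)%nat%:Z.
  by rewrite !PoszD opprD addrACA.
rewrite !i2Z_sub_nat -!plusE; lia.
Qed.

Lemma i2ZN (x : int) : i2Z (- x) = (- i2Z x)%Z.
Proof.
have [n1 [m1 ->]] := int_decomp x.
rewrite opprB !i2Z_sub_nat; lia.
Qed.

Lemma i2ZM (x y : int) : i2Z (x * y) = (i2Z x * i2Z y)%Z.
Proof.
have [n1 [m1 ->]] := int_decomp x; have [n2 [m2 ->]] := int_decomp y.
have -> : (n1%:Z - m1%:Z) * (n2%:Z - m2%:Z) =
   (n1 * n2 + m1 * m2)%nat%:Z - (n1 * m2 + m1 * n2)%nat%:Z.
  by rewrite !PoszD !PoszM mulrBl !mulrBr opprB opprD addrACA.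
rewrite !i2Z_sub_nat -!plusE -!multE. rewrite !Nat2Z.inj_add !Nat2Z.inj_mul. ring.
Qed.

Lemma i2Z_le (x y : int) : x <= y <-> (i2Z x <= i2Z y)%Z.
Proof.
have [n1 [m1 ->]] := int_decomp x; have [n2 [m2 ->]] := int_decomp y.
rewrite !i2Z_sub_nat lerBlDr addrAC lerBrDr -!PoszD lez_nat.
split => [/ssrnat.leP|]; rewrite -!plusE => h; [lia | apply/ssrnat.leP; lia].
Qed.

Lemma i2Z_inj (x y : int) : i2Z x = i2Z y -> x = y.
Proof.
move=> h; apply/le_anti/andP; split; apply/i2Z_le; lia.
Qed.

Lemma i2Z_lt (x y : int) : x < y <-> (i2Z x < i2Z y)%Z.
Proof.
rewrite lt_neqAle; split.
  move=> /andP[/eqP h1 /i2Z_le h2]. have : i2Z x <> i2Z y by move=> /i2Z_inj. lia.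
move=> h; apply/andP; split; last by apply/i2Z_le; lia.
by apply/eqP => e; rewrite e in h; lia.
Qed.

Lemma i2Z0 : i2Z 0 = 0%Z. Proof. by []. Qed.
Lemma i2Z1 : i2Z 1 = 1%Z. Proof. by []. Qed.

Definition Z2i (z : Z) : int :=
  if (0 <=? z)%Z then Posz (Z.to_nat z) else Negz (Z.to_nat (- z) - 1).

Lemma Z2iK (z : Z) : i2Z (Z2i z) = z.
Proof.
rewrite /Z2i. case: (Z.leb_spec 0 z) => h /=; first lia.
rewrite -minusE. lia.
Qed.

Section CoreZ.
Local Open Scope Z_scope.

Definition G (x y z w : Z) : Prop :=
  0 <= y <= x /\ 0 <= z <= w /\ z <= x /\ y <= w.

Lemma coreA (n : nat) : forall x y z w,
  y <= Z.of_nat n -> 0 <= x -> 0 <= y -> 0 <= z -> 0 <= w ->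
  z <= x -> y <= w -> z <= w -> x * w - y * z > 0 ->
  exists p q r s, p * s - q * r = 1 /\
    G (p * x + q * z) (p * y + q * w) (r * x + s * z) (r * y + s * w).
Proof.
induction n as [|n IH]; intros x y z w Hn Hx Hy Hz Hw Hzx Hyw Hzw Hdet.
- exists 1, 0, 0, 1. split; [ring|]. unfold G. lia.
- destruct (Z.le_gt_cases y x) as [Hyx|Hyx].
  + exists 1, 0, 0, 1. split; [ring|]. unfold G. lia.
  + destruct (Z.eq_dec w y) as [Ewy|Ewy].
    * subst w.
      assert (Hxz : z < x).
      { destruct (Z.eq_dec x z); [subst; lia | lia]. }
      set (k := z / (x - z)).
      assert (Hm := Z.div_mod z (x - z) ltac:(lia)).
      assert (Hb := Z.mod_pos_bound z (x - z) ltac:(lia)).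
      exists 1, (-1), (-k), (1 + k). split; [ring|].
      assert (E : - k * x + (1 + k) * z = z mod (x - z)).
      { rewrite Z.mod_eq; [|lia]. unfold k. ring. }
      rewrite E. unfold G. 
      assert (z mod (x - z) <= z).
      { apply Z.mod_le; lia. }
      lia.
    * set (m := (w + y - 1) / y).
      assert (Hm := Z.div_mod (w + y - 1) y ltac:(lia)).
      assert (Hb := Z.mod_pos_bound (w + y - 1) y ltac:(lia)).
      fold m in Hm.
      set (rr := (w + y - 1) mod y) in *.
      assert (Hm2 : m >= 2) by nia.
      assert (Hmx : m * x >= 2 * x) by nia.
      destruct (IH (m * x - z) (m * y - w) x y) as [p [q [r [s [Hd HG]]]]];
        try lia.
      all: try (replace ((m * x - z) * y - (m * y - w) * x) with (x * w - y * z) by ring; lia).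
      exists (p * m + q), (- p), (r * m + s), (- r). split.
      { rewrite <- Hd. ring. }
      replace ((p * m + q) * x + - p * z) with (p * (m * x - z) + q * x) by ring.
      replace ((p * m + q) * y + - p * w) with (p * (m * y - w) + q * y) by ring.
      replace ((r * m + s) * x + - r * z) with (r * (m * x - z) + s * x) by ring.
      replace ((r * m + s) * y + - r * w) with (r * (m * y - w) + s * y) by ring.
      exact HG.
Qed.

Lemma coreB (a b c : Z) : 0 < a -> 0 < c ->
  exists p q r s, p * s - q * r = 1 /\
    G (p * a) (p * b + q * c) (r * a) (r * b + s * c).
Proof.
intros Ha Hc.
set (k := b / c).
assert (Hm := Z.div_mod b c ltac:(lia)).
assert (Hb := Z.mod_pos_bound b c ltac:(lia)).
destruct (coreA (Z.to_nat (b mod c)) a (b mod c) 0 c) as [p [q [r [s [Hd HG]]]]];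
  try lia.
exists p, (q - p * k), r, (s - r * k). split.
{ rewrite <- Hd. ring. }
replace (p * a) with (p * a + q * 0) by ring.
replace (r * a) with (r * a + s * 0) by ring.
replace (p * b + (q - p * k) * c) with (p * (b mod c) + q * c).
2:{ rewrite Z.mod_eq; [|lia]. unfold k. ring. }
replace (r * b + (s - r * k) * c) with (r * (b mod c) + s * c).
2:{ rewrite Z.mod_eq; [|lia]. unfold k. ring. }
exact HG.
Qed.

End CoreZ.


Ltac pushZ := rewrite ?(i2ZD, i2ZN, i2ZM, i2Z0, i2Z1, Z2iK).

Lemma vec_eqP (x y : vec3) : (forall j, x 0 j = y 0 j) -> x = y.
Proof. by move=> h; apply/rowP => j; rewrite h. Qed.

Lemma sc (a b : int) (u v : vec3) j : (a *: u + b *: v) 0 j = a * u 0 j + b * v 0 j.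
Proof. by rewrite !mxE. Qed.

Lemma o2 (H : (2 < 3)%nat) : Ordinal H = 2 :> 'I_3. Proof. by apply/val_inj. Qed.
Lemma o1 (H : (1 < 3)%nat) : Ordinal H = 1 :> 'I_3. Proof. by apply/val_inj. Qed.
Lemma o0 (H : (0 < 3)%nat) : Ordinal H = 0 :> 'I_3. Proof. by apply/val_inj. Qed.

Section Closure.
Variable L : vec3 -> Prop.
Hypothesis HL : is_subgroup L.

Lemma Lopp x : L x -> L (- x).
Proof. case: HL => L0 Ls Lx. by have := Ls 0 x L0 Lx; rewrite sub0r. Qed.

Lemma Ladd x y : L x -> L y -> L (x + y).
Proof. case: HL => L0 Ls Lx Ly. by have := Ls x (- y) Lx (Lopp y Ly); rewrite opprK. Qed.

Lemma Lscale x (k : int) : L x -> L (k *: x).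
Proof.
case: HL => L0 Ls Lx.
have hn : forall n : nat, L (n%:Z *: x).
  elim=> [|n IH]; first by rewrite scale0r.
  have -> : (n.+1)%:Z = n%:Z + 1 by rewrite -addn1 PoszD.
  by rewrite scalerDl scale1r; apply: Ladd.
case: k => n; first exact: hn.
by rewrite NegzE scaleNr; apply: Lopp.
Qed.

Lemma Lcomb x y (a b : int) : L x -> L y -> L (a *: x + b *: y).
Proof. by move=> Lx Ly; apply: Ladd; apply: Lscale. Qed.
End Closure.

Lemma min_nat (P : nat -> Prop) : (exists n, P n) ->
  exists n, P n /\ forall m, P m -> (n <= m)%coq_nat.
Proof.
move=> [n Hn]. induction n as [n IH] using lt_wf_ind.
destruct (classic (exists m, P m /\ (m < n)%coq_nat)) as [[m [Pm lt]]|no].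
  exact: (IH m lt Pm).
exists n; split => // m Pm. apply Nat.nlt_ge => lt. apply: no. by exists m.
Qed.




Lemma A2e (x : vec3) : inA2 x -> x 0 2 = - x 0 0 - x 0 1.
Proof. rewrite /inA2 => h; apply: i2Z_inj; move: (f_equal i2Z h); pushZ; lia. Qed.
Arguments A2e {x}.

Lemma oppE (x : vec3) j : (- x) 0 j = - x 0 j.
Proof. by rewrite mxE. Qed.
Lemma addE (x y : vec3) j : (x + y) 0 j = x 0 j + y 0 j.
Proof. by rewrite mxE. Qed.
Lemma sclE (a : int) (x : vec3) j : (a *: x) 0 j = a * x 0 j.
Proof. by rewrite mxE. Qed.

Ltac cases_j j := case: j => [[|[|[|?]]] ?] //; rewrite ?o0 ?o1 ?o2.

Lemma entries_zero (x : vec3) : inA2 x -> x 0 0 = 0 -> x 0 1 = 0 -> x = 0.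
Proof.
move=> hA h0 h1; apply: vec_eqP => j; rewrite mxE; cases_j j.
- exact: h0.
- exact: h1.
- by rewrite (A2e hA) h0 h1 subr0 oppr0.
Qed.

Lemma not_both_zero (L : vec3 -> Prop) u v : (forall x, L x -> inA2 x) ->
  L u -> L v -> Zindep2 u v -> ~ (u 0 0 = 0 /\ v 0 0 = 0).
Proof.
move=> HA Lu Lv Ind [hu hv].
have Au := HA _ Lu; have Av := HA _ Lv.
have w0 : (v 0 1) *: u + (- u 0 1) *: v = 0.
  apply: vec_eqP => j; rewrite sc mxE; cases_j j.
  - by rewrite hu hv !mulr0 addr0.
  - by rewrite mulrC mulNr addrN.
  - rewrite (A2e Au) (A2e Av) hu hv; apply: i2Z_inj; pushZ; ring.
have [h1 h2] := Ind _ _ w0.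
have u0 : u = 0.
  apply: entries_zero => //. by apply: i2Z_inj; move: (f_equal i2Z h2); pushZ; lia.
have := Ind 1 0; rewrite u0 scaler0 scale0r addr0 => /(_ erefl) [] //.
Qed.
Arguments not_both_zero {L u v}.

Lemma exist_first (L : vec3 -> Prop) : sublattice_A2 L -> rank2 L ->
  exists x, L x /\ (i2Z (x 0 0)%R > 0)%Z.
Proof.
move=> [HS HA] [[u [v [Lu Lv Ind]]] _].
have nb := not_both_zero HA Lu Lv Ind.
case: (Z.lt_total (i2Z (u 0 0)) 0) => [hu|[hu|hu]].
- exists (- u); split; first exact: Lopp. by rewrite oppE; pushZ; lia.
- case: (Z.lt_total (i2Z (v 0 0)) 0) => [hv|[hv|hv]].
  + exists (- v); split; first exact: Lopp. by rewrite oppE; pushZ; lia.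
  + exfalso; apply: nb; split; apply: i2Z_inj; rewrite i2Z0; [exact: hu | exact: hv].
  + exists v; split => //; lia.
- exists u; split => //; lia.
Qed.

Lemma exist_second (L : vec3 -> Prop) : sublattice_A2 L -> rank2 L ->
  exists x, [/\ L x, x 0 0 = 0 & (i2Z (x 0 1)%R < 0)%Z].
Proof.
move=> [HS HA] [[u [v [Lu Lv Ind]]] _].
have nb := not_both_zero HA Lu Lv Ind.
set w : vec3 := (v 0 0) *: u + (- u 0 0) *: v.
have Lw : L w by apply: Lcomb.
have w0 : w 0 0 = 0 by rewrite sc mulrC mulNr addrN.
have w1 : w 0 1 <> 0.
  move=> h. have : w = 0 by apply: entries_zero => //; apply: HA.
  move=> /Ind [h1 h2]. apply: nb; split; [apply: i2Z_inj; move: (f_equal i2Z h2); pushZ; lia | exact: h1].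
case: (Z.lt_total (i2Z (w 0 1)) 0) => [h|[h|h]].
- by exists w.
- by exfalso; apply: w1; apply: i2Z_inj; rewrite h.
- exists (- w); split; first exact: Lopp. by rewrite oppE w0 oppr0. by rewrite oppE; pushZ; lia.
Qed.

Lemma hnf (L : vec3 -> Prop) : sublattice_A2 L -> rank2 L ->
  exists (u v : vec3) (A C : Z),
  [/\ L u, L v, i2Z (u 0 0)%R = A, (0 < A)%Z & v 0 0 = 0] /\
  [/\ i2Z (v 0 1)%R = (- C)%Z, (0 < C)%Z & forall x, L x -> exists a b : int, x = a *: u + b *: v].
Proof.
move=> HL HR.
have [HS HA] := HL.
have [n [[u [Lu hu]] minu]] : exists n, (exists x, L x /\ i2Z (x 0 0)%R = Z.of_nat n.+1)
   /\ forall m, (exists x, L x /\ i2Z (x 0 0)%R = Z.of_nat m.+1) -> (n <= m)%coq_nat.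
  apply: min_nat. have [x [Lx hx]] := exist_first L HL HR.
  exists (Z.to_nat (i2Z (x 0 0)) - 1)%coq_nat. exists x; split => //. lia.
have minu' : forall x, L x -> (0 < i2Z (x 0 0)%R)%Z -> (Z.of_nat n.+1 <= i2Z (x 0 0)%R)%Z.
  move=> x Lx hx. have := minu (Z.to_nat (i2Z (x 0 0)) - 1)%coq_nat.
  have : exists y, L y /\ i2Z (y 0 0)%R = Z.of_nat (Z.to_nat (i2Z (x 0 0)) - 1)%coq_nat.+1.
    by exists x; split => //; lia.
  move=> h /(_ h); lia.
set A := Z.of_nat n.+1.
have divu : forall x, L x -> exists k : int, (x + (- k) *: u) 0 0 = 0.
  move=> x Lx. exists (Z2i (Z.div (i2Z (x 0 0)) A)).
  have hm := Z.div_mod (i2Z (x 0 0)) A ltac:(lia).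
  have hb := Z.mod_pos_bound (i2Z (x 0 0)) A ltac:(lia).
  have Ly : L (x + (- Z2i (Z.div (i2Z (x 0 0)) A)) *: u).
    by apply: Ladd => //; apply: Lscale.
  have ey : i2Z ((x + (- Z2i (Z.div (i2Z (x 0 0)) A)) *: u) 0 0) = Z.modulo (i2Z (x 0 0)) A.
    rewrite addE sclE; pushZ. rewrite hu. lia.
  apply: i2Z_inj; rewrite ey i2Z0.
  case: (Z.eq_dec (Z.modulo (i2Z (x 0 0)) A) 0%Z) => // hne.
  have := minu' _ Ly; rewrite ey. lia.
have [c [[v [Lv hv0 hv]] minv]] : exists n, (exists x, [/\ L x, x 0 0 = 0 & i2Z (x 0 1)%R = (- Z.of_nat n.+1)%Z])
   /\ forall m, (exists x, [/\ L x, x 0 0 = 0 & i2Z (x 0 1)%R = (- Z.of_nat m.+1)%Z]) -> (n <= m)%coq_nat.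
  apply: min_nat. have [x [Lx hx0 hx]] := exist_second L HL HR.
  exists (Z.to_nat (- i2Z (x 0 1)) - 1)%coq_nat. exists x; split => //. lia.
have minv' : forall x, L x -> x 0 0 = 0 -> (i2Z (x 0 1)%R < 0)%Z -> (Z.of_nat c.+1 <= - i2Z (x 0 1)%R)%Z.
  move=> x Lx hx0 hx. have := minv (Z.to_nat (- i2Z (x 0 1)) - 1)%coq_nat.
  have : exists y, [/\ L y, y 0 0 = 0 & i2Z (y 0 1)%R = (- Z.of_nat (Z.to_nat (- i2Z (x 0 1)%R) - 1)%coq_nat.+1)%Z].
    by exists x; split => //; lia.
  move=> h /(_ h); lia.
set C := Z.of_nat c.+1.
have divv : forall x, L x -> x 0 0 = 0 -> exists k : int, x = k *: v.
  move=> x Lx hx0. exists (Z2i (Z.div (i2Z (x 0 1)) (Z.opp C))).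
  have hm := Z.div_mod (i2Z (x 0 1)) (Z.opp C) ltac:(lia).
  have hb := Z.mod_neg_bound (i2Z (x 0 1)) (Z.opp C) ltac:(lia).
  set k := Z2i (Z.div (i2Z (x 0 1)) (Z.opp C)).
  have Ly : L (x + (- k) *: v).
    by apply: Ladd => //; apply: Lscale.
  have ey0 : (x + (- k) *: v) 0 0 = 0.
    by rewrite addE sclE hx0 hv0 mulr0 addr0.
  have ey : i2Z ((x + (- k) *: v) 0 1) = Z.modulo (i2Z (x 0 1)) (Z.opp C).
    rewrite addE sclE; pushZ. rewrite hv /k; pushZ; lia.
  have y0 : x + (- k) *: v = 0.
    apply: entries_zero => //; first by apply: HA.
    apply: i2Z_inj; rewrite ey i2Z0.
    case: (Z.eq_dec (Z.modulo (i2Z (x 0 1)) (Z.opp C)) 0%Z) => // hne.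
    have := minv' _ Ly ey0; rewrite ey. lia.
  apply: vec_eqP => j. move/rowP: y0 => /(_ j). rewrite addE sclE sclE mxE => e.
  apply: i2Z_inj. move: (f_equal i2Z e); pushZ; lia.
exists u, v, A, C; split; first by split => //; lia.
split; [by [] | lia |].
move=> x Lx. have [k1 hk1] := divu x Lx.
have Ly : L (x + (- k1) *: u) by apply: Ladd => //; apply: Lscale.
have [k2 hk2] := divv _ Ly hk1.
exists k1, k2. apply: vec_eqP => j. move/rowP: hk2 => /(_ j). rewrite addE !sclE sc => e.
apply: i2Z_inj. move: (f_equal i2Z e); pushZ; lia.
Qed.

Section ZS.
Local Open Scope Z_scope.
Lemma indepZ (A C U al be p q r s : Z) : (0 < A)%Z -> (0 < C)%Z -> (p* s - q* r = 1)%Z ->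
  (A * (al* p - be* r) = 0)%Z -> (U * (al* p - be* r) - C * (al* q - be* s) = 0)%Z ->
  al = 0%Z /\ be = 0%Z.
Proof.
move=> hA hC hd e0 e1.
have h1 : (al* p - be* r = 0)%Z.
  by case: (Z.mul_eq_0 A (al* p - be* r)) => /(_ e0) [] //; lia.
rewrite h1 Z.mul_0_r in e1.
have h2 : (al* q - be* s = 0)%Z.
  by case: (Z.mul_eq_0 C (al* q - be* s)) => [+ _] => /(_ ltac:(lia)) [] //; lia.
have hp : (al* p = be* r)%Z by lia.
have hq : (al* q = be* s)%Z by lia.
have ea : al = (al * (p* s - q* r))%Z by rewrite hd Z.mul_1_r.
have eb : be = (be * (p* s - q* r))%Z by rewrite hd Z.mul_1_r.
split.
- rewrite ea. replace (al * (p* s - q* r))%Z with (s * (al* p) - r * (al* q))%Z by ring.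
  rewrite hp hq; ring.
- rewrite eb. replace (be * (p* s - q* r))%Z with (p * (be* s) - q * (be* r))%Z by ring.
  rewrite -hp -hq; ring.
Qed.

Lemma spanZ (a b u v p q r s : Z) : (p* s - q* r = 1)%Z ->
  (a* u + b* v = (a* s - r*b)*(p* u + q* v) + (q*a - p*b)*(-(r* u) + -(s* v)))%Z.
Proof. move=> h. rewrite -[(a* u + b* v)%Z]Z.mul_1_l -h. ring. Qed.

End ZS.

Lemma zeroE j : (0 : vec3) 0 j = 0.
Proof. by rewrite mxE. Qed.

Theorem mainTheorem17 (L : vec3 -> Prop) :
  sublattice_A2 L -> rank2 L ->
  exists b0 b1 : vec3, is_basis2 L b0 b1 /\
    (forall i j : 'I_3, i != j -> rows3 b0 b1 i j <= 0).
Proof.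
move=> HL HR. have [HS HA] := HL.
have [u [v [A [C [[Lu Lv hu hA hv0] [hv hC span]]]]]] := hnf L HL HR.
have [p [q [r [s [hd hG]]]]] := coreB A (- i2Z (u 0 1)) C hA hC.
have u2 := A2e (HA _ Lu). have v2 := A2e (HA _ Lv).
set b0 : vec3 := Z2i p *: u + Z2i q *: v.
set b1 : vec3 := (- Z2i r) *: u + (- Z2i s) *: v.
exists b0, b1. split.
- split.
  + exact: Lcomb.
  + exact: Lcomb.
  + move=> al be e.
    have e0 : i2Z ((al *: b0 + be *: b1) 0 0) = 0%Z by rewrite e zeroE.
    have e1 : i2Z ((al *: b0 + be *: b1) 0 1) = 0%Z by rewrite e zeroE.
    move: e0 e1; rewrite /b0 /b1 !sc hv0; pushZ; rewrite hu hv => e0 e1.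
    have [h1 h2] := indepZ A C (i2Z (u 0 1)) (i2Z al) (i2Z be) p q r s hA hC hd
      ltac:(lia) ltac:(lia).
    by split; apply: i2Z_inj; rewrite i2Z0.
  + move=> x Lx. have [a [b ->]] := span x Lx.
    exists (a * Z2i s - Z2i r * b), (Z2i q * a - Z2i p * b).
    apply: vec_eqP => j; rewrite /b0 /b1 !sc.
    apply: i2Z_inj; pushZ.
    have := spanZ (i2Z a) (i2Z b) (i2Z (u 0 j)) (i2Z (v 0 j)) p q r s hd. lia.
- move: hG; rewrite /G => hG.
  case=> [[|[|[|i]]] Hi] //; case=> [[|[|[|j]]] Hj] // _;
  rewrite /rows3 mxE /= ?o0 ?o1 ?o2 /b0 /b1 !(addE, oppE, sclE) ?u2 ?v2 ?hv0;
  apply/i2Z_le; pushZ; rewrite ?hu ?hv; lia.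
Qed.
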